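(* Let $\sigma$ be a positive finite Borel measure on $\partial\mathbb D$ with Poisson integral $u(z)=\int_{\partial\mathbb D}\frac{1-|z|^2}{|\xi-z|^2}d\sigma(\xi)$, and suppose there is $c>0$ with $\frac{\sigma(I)}{|I|}\ge c\,u(z_I)$ for every arc $I\subset\partial\mathbb D$. Then $\sigma$ is doubling: there is $C>0$ with $\sigma(2I)\le C\sigma(I)$ for every arc $I\subset\partial\mathbb D$.
   Context: $m$ is normalized Lebesgue measure on $\partial\mathbb D$, $|I|=m(I)$; $2I$ is the arc with the same center as $I$ and length $2|I|$ (the whole circle if $2|I|\ge1$); $z_I=(1-|I|)\xi_I$ with $\xi_I$ the center of $I$. *)

(* Defs.v *)
(* The unit circle is modelled inside R * R
   (product of Borel sigma-algebras = Borel sigma-algebra of R^2). *)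
From mathcomp Require Import all_boot all_order all_algebra.
From mathcomp Require Import all_classical all_reals all_analysis.
Unset Printing Implicit Defensive.
Import Order.TTheory GRing.Theory Num.Theory.
Local Open Scope ring_scope.
Local Open Scope classical_set_scope.

Definition circle (R : realType) : set (R * R) :=
  [set p | p.1 ^+ 2 + p.2 ^+ 2 = 1].

(* the closed circ_arc with center xi (a point of the circle) and normalized
   length l in (0,1]: points of the circle whose angular distance to xi is
   at most pi*l (half of the angle 2*pi*l). For l = 1 it is the whole circle. *)
Definition circ_arc (R : realType) (xi : R * R) (l : R) : set (R * R) :=
  [set p | circle R p /\ cos (pi * l) <= p.1 * xi.1 + p.2 * xi.2].

Definition z_arc (R : realType) (xi : R * R) (l : R) : R * R :=
  ((1 - l) * xi.1, (1 - l) * xi.2).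

Definition poisson_int (R : realType)
    (sigma : {measure set (R * R)%type -> \bar R}) (z : R * R) : \bar R :=
  (\int[sigma]_(p in circle R)
     ((1 - (z.1 ^+ 2 + z.2 ^+ 2)) / ((p.1 - z.1) ^+ 2 + (p.2 - z.2) ^+ 2))%:E)%E.

(* Main.v *)
Require Import Defs.
From mathcomp Require Import all_boot all_order all_algebra.
From mathcomp Require Import all_classical all_reals all_analysis.
From mathcomp Require Import ring lra.
Import Order.TTheory GRing.Theory Num.Theory numFieldNormedType.Exports.
Local Open Scope ring_scope.
Local Open Scope classical_set_scope.


Lemma sin_le_id (R : realType) (y : R) : 0 <= y -> `|sin y| <= y.
Proof.
rewrite le_eqVlt => /orP[/eqP <-|y0]; first by rewrite sin0 normr0.
have [|c _ h] := @MVT R sin cos 0 y y0 (fun x _ => is_derive_sin x).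
  by apply/continuous_subspaceT => ?; exact: continuous_sin.
move: h; rewrite sin0 !subr0 => ->.
by rewrite normrM (gtr0_norm y0) ler_piMl ?(ltW y0) ?cos_max.
Qed.

Lemma one_minus_cos (R : realType) (x : R) : 0 <= x -> 1 - cos x <= x ^+ 2 / 2.
Proof.
move=> x0.
have -> : x = (x / 2) *+ 2 by rewrite -mulr_natr divfK.
rewrite cos_mulr2n.
have hs := @sin_le_id R (x/2) (divr_ge0 x0 (ler0n _ 2)).
have h2 : sin (x/2) ^+ 2 <= (x/2) ^+ 2.
  rewrite -(real_normK (num_real (sin (x/2)))) !expr2.
  by apply: ler_pM => //; exact: normr_ge0.
have e := cos2Dsin2 (x/2).
move: h2 e.
set s := sin (x/2); set cc := cos (x/2); set y := x/2.
move=> h2 e.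
have -> : (y *+ 2) ^+ 2 / 2 = y ^+ 2 *+ 2 by field.
move: h2 e; generalize (cc ^+ 2) (s ^+ 2) (y ^+ 2) => a b c h e.
lra.
Qed.

Definition Kc (R : realType) : R := 1 + 4 * pi ^+ 2.

Lemma Kc_gt0 {R : realType} : 0 < Kc R.
Proof. by rewrite /Kc ltr_pwDl // mulr_ge0 // sqr_ge0. Qed.

Lemma circ_dot_le1 {R : realType} (p xi : R * R) : circle R p -> circle R xi ->
  p.1 * xi.1 + p.2 * xi.2 <= 1.
Proof.
rewrite /circle /= => hp hx.
have h : 2 * (1 - (p.1 * xi.1 + p.2 * xi.2)) =
   (p.1 - xi.1) ^+ 2 + (p.2 - xi.2) ^+ 2 + (1 - (p.1 ^+ 2 + p.2 ^+ 2))
   + (1 - (xi.1 ^+ 2 + xi.2 ^+ 2)) by ring.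
rewrite hp hx !subrr !addr0 in h.
have : 0 <= 2 * (1 - (p.1 * xi.1 + p.2 * xi.2)) by rewrite h addr_ge0 // sqr_ge0.
rewrite pmulr_rge0 // subr_ge0 //.
Qed.

Lemma poisson_num {R : realType} (xi : R * R) (l : R) : circle R xi ->
  1 - ((z_arc R xi l).1 ^+ 2 + (z_arc R xi l).2 ^+ 2) = l * (2 - l).
Proof.
rewrite /circle /z_arc /= => hx.
have -> : ((1 - l) * xi.1) ^+ 2 + ((1 - l) * xi.2) ^+ 2 =
  (1 - l) ^+ 2 * (xi.1 ^+ 2 + xi.2 ^+ 2) by ring.
rewrite hx; ring.
Qed.

Lemma poisson_den {R : realType} (xi p : R * R) (l : R) : circle R xi -> circle R p ->
  (p.1 - (z_arc R xi l).1) ^+ 2 + (p.2 - (z_arc R xi l).2) ^+ 2 =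
  l ^+ 2 + 2 * (1 - l) * (1 - (p.1 * xi.1 + p.2 * xi.2)).
Proof.
rewrite /circle /z_arc /= => hx hp.
have -> : (p.1 - (1 - l) * xi.1) ^+ 2 + (p.2 - (1 - l) * xi.2) ^+ 2 =
  (p.1 ^+ 2 + p.2 ^+ 2) + (1 - l) ^+ 2 * (xi.1 ^+ 2 + xi.2 ^+ 2)
  - 2 * (1 - l) * (p.1 * xi.1 + p.2 * xi.2) by ring.
rewrite hx hp; ring.
Qed.

Lemma poisson_ge0 {R : realType} (xi p : R * R) (l : R) : circle R xi -> circle R p ->
  0 <= l <= 1 ->
  0 <= (1 - ((z_arc R xi l).1 ^+ 2 + (z_arc R xi l).2 ^+ 2)) /
       ((p.1 - (z_arc R xi l).1) ^+ 2 + (p.2 - (z_arc R xi l).2) ^+ 2).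
Proof.
move=> hx hp /andP[l0 l1].
apply: divr_ge0; last by rewrite addr_ge0 // sqr_ge0.
by rewrite poisson_num // mulr_ge0 // subr_ge0 (le_trans l1) // ler1n.
Qed.

Lemma poisson_lb {R : realType} (xi p : R * R) (l : R) : circle R xi -> circle R p ->
  0 < l <= 1 -> cos (pi * Num.min (2 * l) 1) <= p.1 * xi.1 + p.2 * xi.2 ->
  1 / (Kc R * l) <=
     (1 - ((z_arc R xi l).1 ^+ 2 + (z_arc R xi l).2 ^+ 2)) /
       ((p.1 - (z_arc R xi l).1) ^+ 2 + (p.2 - (z_arc R xi l).2) ^+ 2).
Proof.
move=> hx hp /andP[l0 l1] hc.
rewrite poisson_num // poisson_den //.
have hs := circ_dot_le1 _ _ hp hx.
move: hc hs; set s := p.1 * xi.1 + p.2 * xi.2 => hc hs.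
set m := Num.min (2 * l) 1.
have m0 : 0 <= m by rewrite /m le_min ler01 mulr_ge0 ?ltW.
have m2 : m <= 2 * l by rewrite /m ge_min lexx.
have hcos := @one_minus_cos R _ (mulr_ge0 (pi_ge0 R) m0).
have hpm : (pi * m) ^+ 2 / 2 <= 2 * pi ^+ 2 * l ^+ 2.
  have hM : m ^+ 2 <= 4 * l ^+ 2.
    rewrite !expr2; apply: le_trans (ler_pM m0 m0 m2 m2) _.
    by rewrite mulrACA -natrM.
  have := ler_wpM2l (sqr_ge0 pi) hM.
  rewrite exprMn; move: (pi ^+ 2) (m ^+ 2) (l ^+ 2) => P M L h.
  have -> : 2 * P * L = P * (4 * L) / 2 by field.
  by rewrite ler_pM2r.
have ht : 1 - s <= 2 * pi ^+ 2 * l ^+ 2 by lra.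
have ht0 : 0 <= 1 - s by lra.
have hD : l ^+ 2 + 2 * (1 - l) * (1 - s) <= Kc R * l ^+ 2.
  have h1 : (1 - l) * (1 - s) <= 1 - s by rewrite ler_piMl // lerBlDr lerDl ltW.
  rewrite /Kc -(mulrA 2); move: ht h1; move: ((1 - l) * (1 - s)) => b.
  move: (1 - s) => a; move: (pi ^+ 2) (l ^+ 2) => P L.
  have -> : 2 * P * L = 2 * (P * L) by ring.
  have -> : (1 + 4 * P) * L = L + 4 * (P * L) by ring.
  move: (P * L) => Q; lra.
have hl2 : 0 < l ^+ 2 by rewrite exprn_gt0.
have hDp : 0 < l ^+ 2 + 2 * (1 - l) * (1 - s).
  by rewrite ltr_pwDl // mulr_ge0 // mulr_ge0 // subr_ge0.
rewrite div1r ler_pdivlMr // mulrC ler_pdivrMr ?mulr_gt0 ?Kc_gt0 //.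
apply: (le_trans hD).
have -> : l * (2 - l) * (Kc R * l) = Kc R * l ^+ 2 * (2 - l) by rewrite expr2; ring.
apply: ler_peMr; last by lra.
by rewrite mulr_ge0 ?sqr_ge0 // ltW // Kc_gt0.
Qed.

Lemma measurable_circle {R : realType} : measurable (circle R).
Proof.
have mf : measurable_fun setT (fun p : R * R => p.1 ^+ 2 + p.2 ^+ 2).
  apply: measurable_realfun.measurable_funD; rewrite /=.
    by apply: measurable_realfun.measurable_funM; exact: measurable_fst.
  by apply: measurable_realfun.measurable_funM; exact: measurable_snd.
have := mf measurableT [set 1] (measurable_set1 _).
by rewrite setTI.
Qed.

Lemma measurable_arc {R : realType} (xi : R * R) (l : R) : measurable (circ_arc R xi l).
Proof.
have mf : measurable_fun setT (fun p : R * R => p.1 * xi.1 + p.2 * xi.2).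
  apply: measurable_realfun.measurable_funD; rewrite /=.
    by apply: measurable_realfun.measurable_funM => //; exact: measurable_fst.
  by apply: measurable_realfun.measurable_funM => //; exact: measurable_snd.
have := mf measurableT `[cos (pi * l), +oo[%classic (measurable_itv _).
rewrite setTI => h.
have -> : circ_arc R xi l = circle R `&` ((fun p : R * R => p.1 * xi.1 + p.2 * xi.2) @^-1` `[cos (pi * l), +oo[%classic).
  apply/seteqP; split => p /=; rewrite in_itv /= andbT; by [].
exact: measurableI measurable_circle h.
Qed.

Lemma le_integral_nm d (T : measurableType d) (R : realType) (mu : {measure set T -> \bar R})
  (D : set T) (f g : T -> \bar R) :
  (forall x, D x -> (0 <= f x)%E) -> (forall x, D x -> (f x <= g x)%E) ->
  (\int[mu]_(x in D) f x <= \int[mu]_(x in D) g x)%E.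
Proof.
move=> f0 fg.
have g0 : forall x, D x -> (0 <= g x)%E by move=> x Dx; exact: le_trans (f0 x Dx) (fg x Dx).
rewrite !ge0_integralE //.
apply: ge_ereal_sup => _ [h hf <-]; apply: ereal_sup_ubound => /=.
exists h => // x; apply: le_trans (hf x) _.
rewrite /patch; case: ifP => // /set_mem Dx; exact: fg.
Qed.

Lemma alg_fin {R : realType} (c K l a b : R) : 0 < c -> 0 < K -> 0 < l ->
  c * (1 / (K * l) * a) <= b * l^-1 -> a <= K / c * b.
Proof.
move=> hc hK hl.
have -> : c * (1 / (K * l) * a) = (c * a / K) * l^-1 by field; rewrite ?gt_eqF.
rewrite ler_pM2r ?invr_gt0 // ler_pdivrMr // => h.
rewrite -(ler_pM2l hc).
have -> : c * (K / c * b) = b * K by field; rewrite gt_eqF.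
exact: h.
Qed.

Theorem mainTheorem16 (R : realType)
  (sigma : {finite_measure set (R * R)%type -> \bar R})
  (hsupp : sigma (~` circle R) = 0%E)
  (c : R) (hc : 0 < c)
  (hyp : forall (xi : R * R) (l : R), circle R xi -> 0 < l <= 1 ->
     (c%:E * poisson_int R sigma (z_arc R xi l) <= sigma (circ_arc R xi l) * (l^-1)%:E)%E) :
  exists2 C : R, 0 < C &
    forall (xi : R * R) (l : R), circle R xi -> 0 < l <= 1 ->
      (sigma (circ_arc R xi (Num.min (2 * l) 1)%R) <= C%:E * sigma (circ_arc R xi l))%E.
Proof.
exists (Kc R / c); first by rewrite divr_gt0 // Kc_gt0.
move=> xi l hxi hl.
have l0 : 0 < l by case/andP: hl.
set A := circ_arc R xi (Num.min (2 * l) 1).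
set I := circ_arc R xi l.
set k := 1 / (Kc R * l).
have k0 : 0 < k by rewrite /k divr_gt0 // mulr_gt0 // Kc_gt0.
have AC : A `<=` circle R by move=> p [].
have hu : (k%:E * sigma A <= poisson_int R sigma (z_arc R xi l))%E.
  rewrite /poisson_int.
  have -> : (k%:E * sigma A)%E = (\int[sigma]_(p in circle R) (k * \1_A p)%:E)%E.
    rewrite (@integralZl_indic _ _ _ sigma _ measurable_circle (fun _ => A) k) //; last first.
    - exact: measurable_arc.
    - by move=> /ltW; rewrite leNgt k0.
    rewrite integral_indic; [by rewrite (setIidl AC)|exact: measurable_circle|exact: measurable_arc].
  apply: (@le_integral_nm _ _ R sigma (circle R)).
  - move=> p _; rewrite lee_fin; apply: mulr_ge0; first exact: ltW.
    by rewrite indicE; case: (_ \in _).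
  - move=> p hp; rewrite lee_fin indicE.
    case: (boolP (p \in A)) => [/set_mem pA|_].
    + rewrite mulr1; case: pA => _ hcp; exact: poisson_lb.
    + rewrite mulr0; apply: poisson_ge0 => //; rewrite ltW //; by case/andP: hl.
have fA := fin_num_measure sigma A (measurable_arc _ _).
have fI := fin_num_measure sigma I (measurable_arc _ _).
have := hyp xi l hxi hl.
rewrite -/I.
have [a ea] : exists a, sigma A = a%:E by exists (fine (sigma A)); rewrite fineK.
have [b eb] : exists b, sigma I = b%:E by exists (fine (sigma I)); rewrite fineK.
rewrite ea eb in hu * => h.
have c0 : (0 <= c%:E)%E by rewrite lee_fin ltW.
have h2 := le_trans (lee_wpmul2l c0 hu) h.
rewrite -EFinM lee_fin; move: h2; rewrite -!EFinM lee_fin.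
exact: (@alg_fin R c (Kc R) l a b hc Kc_gt0 l0).
Qed.
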